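(* Let $T_1\in\mathcal L(\mathcal H_1)$ and $T_2\in\mathcal L(\mathcal H_2)$ be invertible, and let $T\in\mathcal L(\mathcal H_1\oplus\mathcal H_2)$ have the block form $T=\begin{pmatrix}T_1&\ast\\0&T_2\end{pmatrix}$. Then for every $n\geq0$, $$\|T^{-n}\|\leq\max(1,\|T_1^{-n}\|)\cdot\max(1,\|T_2^{-n}\|)\cdot\bigl(\max(2,2\|T^n\|^2+1)\bigr)^{1/2}.$$
   Context: $\ast$ denotes an arbitrary bounded operator from $\mathcal H_2$ to $\mathcal H_1$; under these assumptions $T$ is invertible. *)

(* Defs.v *)
From HB Require Import structures.
From mathcomp Require Import all_boot all_order all_algebra.
From mathcomp Require Import complex.
From mathcomp Require Import classical_sets reals.
Set Implicit Arguments. Unset Strict Implicit. Unset Printing Implicit Defensive.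
Import Order.TTheory GRing.Theory Num.Theory.
Local Open Scope ring_scope.
Local Open Scope classical_set_scope.

Record Hilbert (R : realType) := HilbertSpace {
  hcar :> lmodType (complex R);
  hinner : hcar -> hcar -> complex R;
  hinnerDl : forall (a : complex R) (x y z : hcar),
      hinner (a *: x + y) z = a * hinner x z + hinner y z;
  hinnerC : forall x y : hcar, hinner y x = Num.conj (hinner x y);
  hinner_ge0 : forall x : hcar, 0 <= hinner x x;
  hinner_eq0 : forall x : hcar, hinner x x = 0 -> x = 0;
  hcomplete : forall u : nat -> hcar,
      (forall e : R, 0 < e -> exists N, forall m n, (N <= m)%N -> (N <= n)%N ->
          Num.sqrt (complex.Re (hinner (u m - u n) (u m - u n))) < e) ->
      exists l : hcar, forall e : R, 0 < e -> exists N, forall n, (N <= n)%N ->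
          Num.sqrt (complex.Re (hinner (u n - l) (u n - l))) < e
}.

Definition hnorm (R : realType) (H : Hilbert R) (x : H) : R :=
  Num.sqrt (complex.Re (hinner x x)).

(* Norm of the (orthogonal, Hilbert) direct sum H1 (+) H2, realized on pairs. *)
Definition snorm (R : realType) (H1 H2 : Hilbert R) (p : (H1 * H2)%type) : R :=
  Num.sqrt (hnorm p.1 ^+ 2 + hnorm p.2 ^+ 2).

Definition clinear (R : realType) (U V : lmodType (complex R)) (f : U -> V) :=
  forall (a : complex R) (x y : U), f (a *: x + y) = a *: f x + f y.

Definition bounded_linear (R : realType) (U V : lmodType (complex R))
    (nU : U -> R) (nV : V -> R) (f : U -> V) :=
  clinear f /\ exists M : R, forall x, nV (f x) <= M * nU x.

Definition opnorm (R : realType) (U V : Type) (nU : U -> R) (nV : V -> R)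
    (f : U -> V) : R :=
  sup [set nV (f x) | x in [set x | nU x <= 1]].

(* Main.v *)
Require Import Defs.
From HB Require Import structures.
From mathcomp Require Import all_boot all_order all_algebra.
From mathcomp Require Import complex.
From mathcomp Require Import classical_sets reals.
From mathcomp Require Import lra.
Set Implicit Arguments. Unset Strict Implicit. Unset Printing Implicit Defensive.
Import Order.TTheory GRing.Theory Num.Theory.
Local Open Scope ring_scope.
Local Open Scope complex_scope.

Lemma hinner0l (R : realType) (H : Hilbert R) (z : H) : hinner 0 z = 0.
Proof.
have := hinnerDl 1 0 0 z; rewrite scaler0 addr0 mul1r => E.
by apply: (addrI (hinner 0 z)); rewrite addr0 -E.
Qed.

Lemma hinnerZl (R : realType) (H : Hilbert R) (a : complex R) (x z : H) :
  hinner (a *: x) z = a * hinner x z.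
Proof. by have := hinnerDl a x 0 z; rewrite addr0 hinner0l addr0. Qed.

Lemma hinnerDl' (R : realType) (H : Hilbert R) (x y z : H) :
  hinner (x + y) z = hinner x z + hinner y z.
Proof. by have := hinnerDl 1 x y z; rewrite scale1r mul1r. Qed.

Lemma hinnerNl (R : realType) (H : Hilbert R) (x z : H) :
  hinner (- x) z = - hinner x z.
Proof. by rewrite -scaleN1r hinnerZl mulN1r. Qed.

Lemma hinnerDr (R : realType) (H : Hilbert R) (x y z : H) :
  hinner z (x + y) = hinner z x + hinner z y.
Proof. rewrite hinnerC hinnerDl' rmorphD; congr (_ + _); exact/esym/hinnerC. Qed.

Lemma hinnerNr (R : realType) (H : Hilbert R) (x z : H) :
  hinner z (- x) = - hinner z x.
Proof. rewrite hinnerC hinnerNl rmorphN; congr (- _); exact/esym/hinnerC. Qed.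

Lemma hinnerZr_real (R : realType) (H : Hilbert R) (r : R) (x z : H) :
  hinner z (r%:C *: x) = r%:C * hinner z x.
Proof.
rewrite hinnerC hinnerZl rmorphM; congr (_ * _).
  by apply: conj_Creal; rewrite complex_real.
exact/esym/hinnerC.
Qed.

Lemma Re_ge0 (R : realType) (z : complex R) : 0 <= z -> 0 <= complex.Re z.
Proof. by rewrite lecE => /andP[]. Qed.

Lemma hnorm_ge0 (R : realType) (H : Hilbert R) (x : H) : 0 <= hnorm x.
Proof. exact: sqrtr_ge0. Qed.

Lemma hnorm2 (R : realType) (H : Hilbert R) (x : H) :
  hnorm x ^+ 2 = complex.Re (hinner x x).
Proof. by rewrite sqr_sqrtr // Re_ge0 // hinner_ge0. Qed.

Lemma ReD (R : realType) (a b : complex R) : complex.Re (a + b) = complex.Re a + complex.Re b.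
Proof. by case: a; case: b. Qed.
Lemma ReN (R : realType) (a : complex R) : complex.Re (- a) = - complex.Re a.
Proof. by case: a. Qed.
Lemma ReMr (R : realType) (r : R) (a : complex R) : complex.Re (r%:C * a) = r * complex.Re a.
Proof. by case: a => a b /=; rewrite mul0r subr0. Qed.

Lemma hnormN (R : realType) (H : Hilbert R) (x : H) : hnorm (- x) = hnorm x.
Proof. by rewrite /hnorm hinnerNl hinnerNr opprK. Qed.

Lemma hnorm0 (R : realType) (H : Hilbert R) : hnorm (0 : H) = 0.
Proof. by rewrite /hnorm hinner0l sqrtr0. Qed.

Lemma hnormD2 (R : realType) (H : Hilbert R) (x y : H) :
  hnorm (x + y) ^+ 2 <= 2 * hnorm x ^+ 2 + 2 * hnorm y ^+ 2.
Proof.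
rewrite !hnorm2.
have := @Re_ge0 R _ (hinner_ge0 (x - y)).
rewrite !hinnerDl' !hinnerDr !hinnerNl !hinnerNr !ReD !ReN.
lra.
Qed.

Lemma hnormZ (R : realType) (H : Hilbert R) (r : R) (x : H) : 0 <= r ->
  hnorm (r%:C *: x) = r * hnorm x.
Proof.
move=> r0; rewrite /hnorm hinnerZl hinnerZr_real !ReMr mulrA sqrtrM ?mulr_ge0 //.
by rewrite -expr2 sqrtr_sqr ger0_norm.
Qed.
Definition nrm_ok (R : realType) (U : lmodType (complex R)) (n : U -> R) :=
  [/\ (forall x, 0 <= n x), n 0 = 0 & (forall (r : R) x, 0 < r -> n (r%:C *: x) = r * n x)].

Lemma clinear0 (R : realType) (U V : lmodType (complex R)) (f : U -> V) :
  clinear f -> f 0 = 0.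
Proof.
move=> lf; have := lf 1 0 0; rewrite scaler0 addr0 scale1r => E.
by apply: (addrI (f 0)); rewrite addr0 -E.
Qed.

Lemma clinearZ (R : realType) (U V : lmodType (complex R)) (f : U -> V) a x :
  clinear f -> f (a *: x) = a *: f x.
Proof. by move=> lf; have := lf a x 0; rewrite !addr0 clinear0 // addr0. Qed.

Lemma clinearD (R : realType) (U V : lmodType (complex R)) (f : U -> V) x y :
  clinear f -> f (x + y) = f x + f y.
Proof. by move=> lf; have := lf 1 x y; rewrite !scale1r. Qed.

Lemma opnorm_hassup (R : realType) (U V : lmodType (complex R)) (nU : U -> R) (nV : V -> R) f :
  nrm_ok nU -> nrm_ok nV -> bounded_linear nU nV f ->
  has_sup [set nV (f x) | x in [set x | nU x <= 1]].
Proof.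
move=> [U0 U1 U2] [V0 V1 V2] [lf [M HM]]; split.
  by exists (nV (f 0)), 0 => //=; rewrite U1.
exists (Num.max M 0) => _ [x /= Hx <-].
apply: (le_trans (HM x)).
have h1 : M <= Num.max M 0 by rewrite le_max lexx.
have h2 : 0 <= Num.max M 0 by rewrite le_max lexx orbT.
have := U0 x; nra.
Qed.

Lemma opnorm_ge0 (R : realType) (U V : lmodType (complex R)) (nU : U -> R) (nV : V -> R) f :
  nrm_ok nU -> nrm_ok nV -> bounded_linear nU nV f -> 0 <= opnorm nU nV f.
Proof.
move=> hU hV hf; have hs := opnorm_hassup hU hV hf.
case: hU hV => [U0 U1 U2] [V0 V1 V2].
apply: (le_trans (V0 (f 0))); apply: sup_upper_bound => //.
by exists 0 => //=; rewrite U1.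
Qed.

Lemma opnorm_bound (R : realType) (U V : lmodType (complex R)) (nU : U -> R) (nV : V -> R) f :
  nrm_ok nU -> nrm_ok nV -> bounded_linear nU nV f ->
  forall x, nV (f x) <= opnorm nU nV f * nU x.
Proof.
move=> hU hV hf x; have hs := opnorm_hassup hU hV hf.
have g0 := opnorm_ge0 hU hV hf.
case: hU hV hf => [U0 U1 U2] [V0 V1 V2] [lf [M HM]].
have := U0 x; rewrite le_eqVlt => /orP[/eqP E|xp].
  by have := HM x; rewrite -E !mulr0.
set r := nU x in xp *.
have ri : 0 < r^-1 by rewrite invr_gt0.
have key : r^-1 * nV (f x) <= opnorm nU nV f.
  apply: sup_upper_bound => //; exists (r^-1%:C *: x) => /=.
    by rewrite U2 // mulVf // gt_eqF.
  by rewrite clinearZ // V2.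
have -> : nV (f x) = r * (r^-1 * nV (f x)) by rewrite mulrA mulfV ?mul1r // gt_eqF.
move: key xp; set k := r^-1 * _; nra.
Qed.

Lemma opnorm_le (R : realType) (U V : lmodType (complex R)) (nU : U -> R) (nV : V -> R) f c :
  nrm_ok nU -> 0 <= c -> (forall x, nV (f x) <= c * nU x) -> opnorm nU nV f <= c.
Proof.
move=> [U0 U1 U2] c0 H; apply: ge_sup.
  by exists (nV (f 0)), 0 => //=; rewrite U1.
move=> _ [x /= Hx <-]; apply: (le_trans (H x)); nra.
Qed.

Lemma clinear_iter (R : realType) (U : lmodType (complex R)) (f : U -> U) n :
  clinear f -> clinear (iter n f).
Proof. by move=> lf; elim: n => [//|n IH] a x y /=; rewrite IH lf. Qed.

Lemma bounded_iter (R : realType) (U : lmodType (complex R)) (nU : U -> R) (f : U -> U) n :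
  nrm_ok nU -> bounded_linear nU nU f -> bounded_linear nU nU (iter n f).
Proof.
move=> [U0 U1 U2] [lf [M HM]]; split; first exact: clinear_iter.
have h1 : M <= Num.max M 0 by rewrite le_max lexx.
have h2 : 0 <= Num.max M 0 by rewrite le_max lexx orbT.
exists (Num.max M 0 ^+ n); elim: n => [|n IH] x /=; first by rewrite expr0 mul1r.
have := HM (iter n f x); have := IH x; have := U0 (iter n f x); have := U0 x.
rewrite exprS; set m := Num.max M 0; set q := m ^+ n.
have : 0 <= q by rewrite exprn_ge0.
move=> q0 x0 y0 Hy Hf.
have e1 : M * nU (iter n f x) <= m * nU (iter n f x) by rewrite ler_wpM2r.
have e2 : m * nU (iter n f x) <= m * (q * nU x) by rewrite ler_wpM2l.
by rewrite -mulrA; apply: (le_trans Hf); apply: (le_trans e1).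
Qed.

Lemma cancel_iter (T : Type) (f g : T -> T) n : cancel f g -> cancel (iter n f) (iter n g).
Proof.
move=> fK; elim: n => [//|n IH] x.
by rewrite iterSr /= fK IH.
Qed.
Lemma hnorm_ok (R : realType) (H : Hilbert R) : nrm_ok (@hnorm R H).
Proof. split; [exact: hnorm_ge0 | exact: hnorm0 | move=> r x r0; exact/hnormZ/ltW]. Qed.

Lemma pairD (R : realType) (H1 H2 : Hilbert R) (x x' : H1) (y y' : H2) :
  ((x, y) + (x', y') : (H1 * H2)%type) = (x + x', y + y').
Proof. by []. Qed.

Lemma pairZ (R : realType) (H1 H2 : Hilbert R) (a : complex R) (x : H1) (y : H2) :
  (a *: ((x, y) : (H1 * H2)%type)) = (a *: x, a *: y).
Proof. by []. Qed.

Lemma snorm2 (R : realType) (H1 H2 : Hilbert R) (p : (H1 * H2)%type) :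
  snorm p ^+ 2 = hnorm p.1 ^+ 2 + hnorm p.2 ^+ 2.
Proof. by rewrite sqr_sqrtr // addr_ge0 // sqr_ge0. Qed.

Lemma snorm_ok (R : realType) (H1 H2 : Hilbert R) : nrm_ok (@snorm R H1 H2).
Proof.
split; first by move=> p; exact: sqrtr_ge0.
  by rewrite /snorm /= !hnorm0 expr0n /= addr0 sqrtr0.
move=> r [x y] r0; rewrite /snorm /= !hnormZ ?ltW // !exprMn -mulrDr sqrtrM ?sqr_ge0 //.
by rewrite sqrtr_sqr ger0_norm // ltW.
Qed.

Lemma sq_le (R : realType) (u c v : R) : 0 <= u -> u <= c * v -> u ^+ 2 <= c ^+ 2 * v ^+ 2.
Proof. move=> *; nra. Qed.

Lemma le_from_sq (R : realType) (u w : R) : 0 <= u -> 0 <= w -> u ^+ 2 <= w ^+ 2 -> u <= w.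
Proof. move=> *; nra. Qed.

Lemma le_sqrt_mul (R : realType) (u K w : R) : 0 <= u -> 0 <= K -> 0 <= w ->
  u ^+ 2 <= K * w ^+ 2 -> u <= Num.sqrt K * w.
Proof.
move=> u0 K0 w0 H; apply: le_from_sq => //; first by rewrite mulr_ge0 ?sqrtr_ge0.
by rewrite exprMn sqr_sqrtr.
Qed.

Unset Implicit Arguments.
Close Scope complex_scope.

Theorem lemma7p9 (R : realType) (H1 H2 : Hilbert R)
  (T1 T1inv : H1 -> H1) (T2 T2inv : H2 -> H2) (S : H2 -> H1)
  (T : (H1 * H2)%type -> (H1 * H2)%type) :
  bounded_linear (@hnorm R H1) (@hnorm R H1) T1 ->
  bounded_linear (@hnorm R H1) (@hnorm R H1) T1inv ->
  cancel T1 T1inv -> cancel T1inv T1 ->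
  bounded_linear (@hnorm R H2) (@hnorm R H2) T2 ->
  bounded_linear (@hnorm R H2) (@hnorm R H2) T2inv ->
  cancel T2 T2inv -> cancel T2inv T2 ->
  bounded_linear (@hnorm R H2) (@hnorm R H1) S ->
  (forall (x : H1) (y : H2), T (x, y) = (T1 x + S y, T2 y)) ->
  exists Tinv : (H1 * H2)%type -> (H1 * H2)%type,
    [/\ bounded_linear (@snorm R H1 H2) (@snorm R H1 H2) Tinv,
        cancel T Tinv, cancel Tinv T &
        forall n : nat,
          opnorm (@snorm R H1 H2) (@snorm R H1 H2) (iter n Tinv) <=
            Num.max 1 (opnorm (@hnorm R H1) (@hnorm R H1) (iter n T1inv)) *
            Num.max 1 (opnorm (@hnorm R H2) (@hnorm R H2) (iter n T2inv)) *
            Num.sqrt (Num.max 2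
              (2 * opnorm (@snorm R H1 H2) (@snorm R H1 H2) (iter n T) ^+ 2 + 1))].
Proof.
move=> bT1 bT1i c1 c1' bT2 bT2i c2 c2' bS hT.
have hok1 := hnorm_ok H1; have hok2 := hnorm_ok H2; have sok := snorm_ok H1 H2.
have [l1 _] := bT1; have [l1i _] := bT1i; have [l2 _] := bT2; have [l2i _] := bT2i.
have [lS _] := bS.
pose Tinv := fun p : (H1 * H2)%type => (T1inv (p.1 - S (T2inv p.2)), T2inv p.2).
have cT : cancel T Tinv.
  by move=> [x y]; rewrite hT /Tinv /= c2 addrK c1.
have cT' : cancel Tinv T.
  by move=> [x y]; rewrite /Tinv /= hT c2' c1' subrK.
have lT : clinear T.
  move=> a [x y] [x' y']; rewrite pairZ pairD !hT pairZ pairD.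
  by rewrite l1 lS l2 scalerDr addrACA.
have lTi : clinear Tinv.
  move=> a [x y] [x' y']; rewrite /Tinv pairZ pairD /= pairZ pairD.
  rewrite l2i lS.
  have -> : a *: x + x' - (a *: S (T2inv y) + S (T2inv y')) =
            a *: (x - S (T2inv y)) + (x' - S (T2inv y')).
    by rewrite scalerBr opprD addrACA.
  by rewrite l1i.
have nT1 := opnorm_bound hok1 hok1 bT1.
have nT1i := opnorm_bound hok1 hok1 bT1i.
have nT2 := opnorm_bound hok2 hok2 bT2.
have nT2i := opnorm_bound hok2 hok2 bT2i.
have nS := opnorm_bound hok2 hok1 bS.
have g1 := opnorm_ge0 hok1 hok1 bT1.
have g1i := opnorm_ge0 hok1 hok1 bT1i.
have g2 := opnorm_ge0 hok2 hok2 bT2.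
have g2i := opnorm_ge0 hok2 hok2 bT2i.
have gS := opnorm_ge0 hok2 hok1 bS.
set t1 := opnorm _ _ T1 in nT1 g1.
set t1i := opnorm _ _ T1inv in nT1i g1i.
set t2 := opnorm _ _ T2 in nT2 g2.
set t2i := opnorm _ _ T2inv in nT2i g2i.
set s := opnorm _ _ S in nS gS.
have bT : bounded_linear (@snorm R H1 H2) (@snorm R H1 H2) T.
  split => //; exists (Num.sqrt (2 * t1 ^+ 2 + 2 * s ^+ 2 + t2 ^+ 2)) => -[x y].
  have K0 : 0 <= 2 * t1 ^+ 2 + 2 * s ^+ 2 + t2 ^+ 2.
    by rewrite !addr_ge0 ?mulr_ge0 ?sqr_ge0.
  apply: le_sqrt_mul => //; [exact: sqrtr_ge0 | exact: sqrtr_ge0 |].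
  rewrite !snorm2 hT /=.
  have e1 := sq_le (hnorm_ge0 _) (nT1 x).
  have e2 := sq_le (hnorm_ge0 _) (nS y).
  have e3 := sq_le (hnorm_ge0 _) (nT2 y).
  have e4 := hnormD2 (T1 x) (S y).
  have p1 : 0 <= t1 ^+ 2 * hnorm y ^+ 2 by rewrite mulr_ge0 ?sqr_ge0.
  have p2 : 0 <= s ^+ 2 * hnorm x ^+ 2 by rewrite mulr_ge0 ?sqr_ge0.
  have p3 : 0 <= t2 ^+ 2 * hnorm x ^+ 2 by rewrite mulr_ge0 ?sqr_ge0.
  lra.
have bTi : bounded_linear (@snorm R H1 H2) (@snorm R H1 H2) Tinv.
  split => //; set K := 2 * t1i ^+ 2 + 2 * t1i ^+ 2 * s ^+ 2 * t2i ^+ 2 + t2i ^+ 2.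
  exists (Num.sqrt K) => -[x y].
  have K0 : 0 <= K by rewrite /K !addr_ge0 ?mulr_ge0 ?sqr_ge0.
  apply: le_sqrt_mul => //; [exact: sqrtr_ge0 | exact: sqrtr_ge0 |].
  rewrite !snorm2 /Tinv /=.
  have e1 := sq_le (hnorm_ge0 _) (nT1i (x - S (T2inv y))).
  have e2 := sq_le (hnorm_ge0 _) (nS (T2inv y)).
  have e3 := sq_le (hnorm_ge0 _) (nT2i y).
  have e4 := hnormD2 x (- S (T2inv y)); rewrite hnormN in e4.
  have e5 : t1i ^+ 2 * hnorm (x - S (T2inv y)) ^+ 2 <=
            t1i ^+ 2 * (2 * hnorm x ^+ 2 + 2 * (s ^+ 2 * (t2i ^+ 2 * hnorm y ^+ 2))).
    rewrite ler_wpM2l ?sqr_ge0 //; apply: (le_trans e4).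
    rewrite lerD2l ler_wpM2l //; apply: (le_trans e2).
    by rewrite ler_wpM2l ?sqr_ge0.
  have p1 : 0 <= t1i ^+ 2 * hnorm y ^+ 2 by rewrite mulr_ge0 ?sqr_ge0.
  have p2 : 0 <= t1i ^+ 2 * s ^+ 2 * t2i ^+ 2 * hnorm x ^+ 2.
    exact: mulr_ge0 (mulr_ge0 (mulr_ge0 (sqr_ge0 _) (sqr_ge0 _)) (sqr_ge0 _)) (sqr_ge0 _).
  have p3 : 0 <= t2i ^+ 2 * hnorm x ^+ 2 by rewrite mulr_ge0 ?sqr_ge0.
  rewrite /K; lra.
exists Tinv; split => // n.
have bA := bounded_iter n hok1 bT1i.
have bB := bounded_iter n hok2 bT2i.
have bP := bounded_iter n sok bT.
have nA := opnorm_bound hok1 hok1 bA.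
have nB := opnorm_bound hok2 hok2 bB.
have nP := opnorm_bound sok sok bP.
have gA := opnorm_ge0 hok1 hok1 bA.
have gB := opnorm_ge0 hok2 hok2 bB.
have gP := opnorm_ge0 sok sok bP.
set a := opnorm _ _ (iter n T1inv) in nA gA *.
set b := opnorm _ _ (iter n T2inv) in nB gB *.
set pn := opnorm _ _ (iter n T) in nP gP *.
set a' := Num.max 1 a; set b' := Num.max 1 b.
set K := Num.max 2 (2 * pn ^+ 2 + 1).
have a1 : 1 <= a' by rewrite le_max lexx.
have a2 : a <= a' by rewrite le_max lexx orbT.
have b1 : 1 <= b' by rewrite le_max lexx.
have b2 : b <= b' by rewrite le_max lexx orbT.
have K1 : 2 <= K by rewrite le_max lexx.
have K2 : 2 * pn ^+ 2 + 1 <= K by rewrite le_max lexx orbT.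
have K0 : 0 <= K by apply: (le_trans _ K1).
have C0 : 0 <= a' * b' * Num.sqrt K.
  by rewrite !mulr_ge0 ?sqrtr_ge0 // ?(le_trans ler01 a1) ?(le_trans ler01 b1).
apply: opnorm_le => // -[x y].
have F1 : forall k p, (iter k Tinv p).2 = iter k T2inv p.2.
  by move=> k p; elim: k => [//|k IH] /=; rewrite IH.
have F2 : forall k (u : H1), iter k T (u, 0) = (iter k T1 u, 0).
  move=> k u; elim: k => [//|k IH] /=; rewrite IH hT.
  by rewrite (clinear0 lS) (clinear0 l2) addr0.
have lP := clinear_iter n lT.
case E: (iter n Tinv (x, y)) => [u v].
have hv : v = iter n T2inv y by have := F1 n (x, y); rewrite E.
have hPQ : iter n T (u, v) = (x, y) by rewrite -E (cancel_iter n cT').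
have dec : iter n T (u, v) = (iter n T1 u, 0) + iter n T (0, v).
  by rewrite -F2 -clinearD // pairD addr0 add0r.
set X := (iter n T (0, v)).1.
have hx : x = iter n T1 u + X by have := congr1 fst hPQ; rewrite dec.
have hu : u = iter n T1inv (x - X) by rewrite hx addrK (cancel_iter n c1).
have f1 : hnorm u <= a * hnorm (x - X) by rewrite hu; exact: nA.
have f2 := hnormD2 x (- X); rewrite hnormN in f2.
have f3 : hnorm X <= snorm (iter n T (0, v)).
  apply: le_from_sq; [exact: hnorm_ge0 | exact: sqrtr_ge0 |].
  by rewrite snorm2 lerDl sqr_ge0.
have s0v : snorm ((0, v) : (H1 * H2)%type) = hnorm v.
  by rewrite /snorm /= hnorm0 expr0n add0r sqrtr_sqr ger0_norm // hnorm_ge0.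
have f4 : hnorm X <= pn * hnorm v by rewrite -s0v; apply: (le_trans f3); exact: nP.
have f5 : hnorm v <= b * hnorm y by rewrite hv; exact: nB.
have h1 := sq_le (hnorm_ge0 _) f1.
have h3 := sq_le (hnorm_ge0 _) f4.
have h5 := sq_le (hnorm_ge0 _) f5.
apply: le_from_sq; [exact: sqrtr_ge0 | by rewrite mulr_ge0 // sqrtr_ge0 |].
have -> : (a' * b' * Num.sqrt K * snorm (x, y)) ^+ 2 =
          a' ^+ 2 * b' ^+ 2 * K * (hnorm x ^+ 2 + hnorm y ^+ 2).
  by rewrite !exprMn sqr_sqrtr // snorm2.
rewrite snorm2 /=.
set U2 := hnorm u ^+ 2 in h1 *; set V2 := hnorm v ^+ 2 in h3 h5 *.
set X2 := hnorm x ^+ 2 in f2 *; set Y2 := hnorm y ^+ 2 in h5 *.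
set W2 := hnorm (x - X) ^+ 2 in h1 f2.
set Z2 := hnorm X ^+ 2 in f2 h3.
have U0 : 0 <= U2 by exact: sqr_ge0.
have V0 : 0 <= V2 by exact: sqr_ge0.
have X0 : 0 <= X2 by exact: sqr_ge0.
have Y0 : 0 <= Y2 by exact: sqr_ge0.
have W0 : 0 <= W2 by exact: sqr_ge0.
have A2 : a ^+ 2 <= a' ^+ 2 by nra.
have A1 : 1 <= a' ^+ 2 by nra.
have B2 : b ^+ 2 <= b' ^+ 2 by nra.
have B1 : 1 <= b' ^+ 2 by nra.
have s1 : U2 <= a' ^+ 2 * W2 by apply: (le_trans h1); rewrite ler_wpM2r.
have s2 : W2 <= 2 * X2 + 2 * (pn ^+ 2 * V2) by lra.
have s3 : U2 <= a' ^+ 2 * (2 * X2 + 2 * (pn ^+ 2 * V2)).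
  by apply: (le_trans s1); rewrite ler_wpM2l // (le_trans _ A1).
have s4a : (2 * pn ^+ 2 + 1) * V2 <= K * V2 by rewrite ler_wpM2r.
have s4b : 2 * X2 <= K * X2 by rewrite ler_wpM2r.
have s4 : 2 * X2 + 2 * (pn ^+ 2 * V2) + V2 <= K * (X2 + V2) by lra.
have s5 : V2 <= a' ^+ 2 * V2 by rewrite -{1}(mul1r V2) ler_wpM2r.
have s6 : U2 + V2 <= a' ^+ 2 * (K * (X2 + V2)).
  have := ler_wpM2l (le_trans ler01 A1) s4; lra.
have s7a : V2 <= b' ^+ 2 * Y2.
  by apply: (le_trans h5); rewrite ler_wpM2r.
have s7b : X2 <= b' ^+ 2 * X2 by rewrite -{1}(mul1r X2) ler_wpM2r.
have s7 : X2 + V2 <= b' ^+ 2 * (X2 + Y2) by lra.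
have s8 : a' ^+ 2 * (K * (X2 + V2)) <= a' ^+ 2 * (K * (b' ^+ 2 * (X2 + Y2))).
  by rewrite ler_wpM2l ?(le_trans ler01 A1) // ler_wpM2l.
apply: (le_trans s6); apply: (le_trans s8); lra.
Qed.
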